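(* Let $V$ be a unitary irreducible lowest weight representation of $\hat{G}_{\Lambda,\Lambda_F}$ with lowest weight $h$. If $\dot I,\dot J$ are sequences and $\lambda_1,\lambda_2,\lambda_3,\lambda_4\in\{1,\dots,\Lambda_F\}$ satisfy $\dot I\lambda_1\lambda_3>\dot J\lambda_2\lambda_4$, then $h_I(\lambda_2;\dot J;\lambda_4)-h_I(\lambda_1;\dot I;\lambda_3)$ is a non-negative integer.
   Context: Fix positive integers $\Lambda,\Lambda_F$. A sequence $\dot I=i_1\cdots i_a$ is a finite, possibly empty, sequence of integers in $\{1,\dots,\Lambda\}$; $\#(\dot I)=a$, juxtaposition denotes concatenation, and $\delta^{\dot I}_{\dot J}$ is $1$ if $\dot I=\dot J$ and $0$ otherwise (similarly for integers). Let $\mathcal{T}_o$ be the complex vector space with basis the symbols $\bar\phi^{\lambda_1}\otimes s^{\dot K}\otimes\phi^{\lambda_2}$, $1\le\lambda_1,\lambda_2\le\Lambda_F$, $\dot K$ any sequence. For all sequences $\dot I,\dot J$ and all $\lambda_i\in\{1,\dots,\Lambda_F\}$ define linear operators on $\mathcal{T}_o$: first kind: $\bar\Xi^{\lambda_1}_{\lambda_2}\otimes f^{\dot I}_{\dot J}\otimes\Xi^{\lambda_3}_{\lambda_4}(\bar\phi^{\lambda_5}\otimes s^{\dot K}\otimes\phi^{\lambda_6})=\delta^{\lambda_5}_{\lambda_2}\delta^{\dot K}_{\dot J}\delta^{\lambda_6}_{\lambda_4}\,\bar\phi^{\lambda_1}\otimes s^{\dot I}\otimes\phi^{\lambda_3}$;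 second kind: $\bar\Xi^{\lambda_1}_{\lambda_2}\otimes l^{\dot I}_{\dot J}(\bar\phi^{\lambda_3}\otimes s^{\dot K}\otimes\phi^{\lambda_4})=\delta^{\lambda_3}_{\lambda_2}\sum_{\dot K_1\dot K_2=\dot K}\delta^{\dot K_1}_{\dot J}\,\bar\phi^{\lambda_1}\otimes s^{\dot I\dot K_2}\otimes\phi^{\lambda_4}$; third kind: $r^{\dot I}_{\dot J}\otimes\Xi^{\lambda_1}_{\lambda_2}(\bar\phi^{\lambda_3}\otimes s^{\dot K}\otimes\phi^{\lambda_4})=\delta^{\lambda_4}_{\lambda_2}\sum_{\dot K_1\dot K_2=\dot K}\delta^{\dot K_2}_{\dot J}\,\bar\phi^{\lambda_3}\otimes s^{\dot K_1\dot I}\otimes\phi^{\lambda_1}$; fourth kind: $\sigma^{\dot I}_{\dot J}(\bar\phi^{\lambda_1}\otimes s^{\dot K}\otimes\phi^{\lambda_2})=\sum_{\dot K_1\dot K_2\dot K_3=\dot K}\delta^{\dot K_2}_{\dot J}\,\bar\phi^{\lambda_1}\otimes s^{\dot K_1\dot I\dot K_3}\otimes\phi^{\lambda_2}$; sums over all ways to write $\dot K$ as a concatenation of possibly empty sequences. The open string algebra $\hat{G}_{\Lambda,\Lambda_F}$ is the Lie algebra (commutator bracket) of operators on $\mathcal{T}_o$ spanned by these operators. Ordering: for finite sequences of positive integers $a=a_1\cdots a_m$, $b=b_1\cdots b_n$, $a>b$ means $m>n$, or $m=n\ne0$ and $a_r>b_r$ at the first index $r$ where they differ (applied to concatenations like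 $\dot I\lambda_1\lambda_3$). $G^{00}$ is the span of all $\bar\Xi^{\lambda_1}_{\lambda_1}\otimes f^{\dot I}_{\dot I}\otimes\Xi^{\lambda_2}_{\lambda_2}$, $\bar\Xi^{\lambda}_{\lambda}\otimes l^{\dot I}_{\dot I}$, $r^{\dot I}_{\dot I}\otimes\Xi^{\lambda}_{\lambda}$, $\sigma^{\dot I}_{\dot I}$. $G^-$ is the span of all operators of the four kinds with $\#(\dot I)<\#(\dot J)$, together with those with $\#(\dot I)=\#(\dot J)$ and $\dot J\lambda_2\lambda_4>\dot I\lambda_1\lambda_3$ (first kind), $\dot J\lambda_2>\dot I\lambda_1$ (second and third kind), $\dot J>\dot I$ (fourth kind). $\omega$ is the antilinear anti-involution swapping upper and lower indices: $\omega(\bar\Xi^{\lambda_1}_{\lambda_2}\otimes f^{\dot I}_{\dot J}\otimes\Xi^{\lambda_3}_{\lambda_4})=\bar\Xi^{\lambda_2}_{\lambda_1}\otimes f^{\dot J}_{\dot I}\otimes\Xi^{\lambda_4}_{\lambda_3}$, $\omega(\bar\Xi^{\lambda_1}_{\lambda_2}\otimes l^{\dot I}_{\dot J})=\bar\Xi^{\lambda_2}_{\lambda_1}\otimes l^{\dot J}_{\dot I}$, $\omega(r^{\dot I}_{\dot J}\otimes\Xi^{\lambda_1}_{\lambda_2})=r^{\dot J}_{\dot I}\otimes\Xi^{\lambda_2}_{\lambda_1}$, $\omega(\sigma^{\dot I}_{\dot J})=\sigma^{\dot J}_{\dot I}$. A lowest weight $h$ is a linear functional on $G^{00}$ real on the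 spanning operators; $h_I(\lambda_1;\dot I;\lambda_2)$ denotes its value on $\bar\Xi^{\lambda_1}_{\lambda_1}\otimes f^{\dot I}_{\dot I}\otimes\Xi^{\lambda_2}_{\lambda_2}$. A unitary lowest weight representation with lowest weight $h$ is a representation $V$ generated by a vector $v\ne0$ with $G^-v=0$ and $Hv=h(H)v$ for $H\in G^{00}$, carrying a positive definite Hermitian form with $\langle Xu,w\rangle=\langle u,\omega(X)w\rangle$ for all $X$. *)

(* Defs.v *)
From HB Require Import structures.
From mathcomp Require Import all_boot all_order all_algebra.
From mathcomp Require Import reals complex.
Set Implicit Arguments. Unset Strict Implicit. Unset Printing Implicit Defensive.
Import Order.TTheory GRing.Theory Num.Theory.
Local Open Scope ring_scope.

(** Sequences are [seq nat] with entries in {1,...,Lam}; the "flavour"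
    indices lambda are [nat] in {1,...,LamF} (paper's values, no shift). *)
Definition seq_ok (Lam : nat) (s : seq nat) : bool := all (fun i => (0 < i <= Lam)%N) s.
Definition lam_ok (LamF : nat) (l : nat) : bool := (0 < l <= LamF)%N.

(** Basis symbols  phibar^{l1} (x) s^K (x) phi^{l2}  of T_o, as triples. *)
Definition basis := (nat * seq nat * nat)%type.
Definition basis_ok (Lam LamF : nat) (b : basis) : bool :=
  [&& lam_ok LamF b.1.1, seq_ok Lam b.1.2 & lam_ok LamF b.2].

(** Labels of the spanning operators of the open string algebra. *)
Inductive gen : Type :=
| Gen1 (l1 l2 : nat) (Is Js : seq nat) (l3 l4 : nat)
    (* Xibar^{l1}_{l2} (x) f^I_J (x) Xi^{l3}_{l4} *)
| Gen2 (l1 l2 : nat) (Is Js : seq nat)   (* Xibar^{l1}_{l2} (x) l^I_J *)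
| Gen3 (Is Js : seq nat) (l1 l2 : nat)   (* r^I_J (x) Xi^{l1}_{l2} *)
| Gen4 (Is Js : seq nat).                (* sigma^I_J *)

Definition gen_ok (Lam LamF : nat) (g : gen) : bool :=
  match g with
  | Gen1 l1 l2 Is Js l3 l4 => [&& lam_ok LamF l1, lam_ok LamF l2, seq_ok Lam Is,
                               seq_ok Lam Js, lam_ok LamF l3 & lam_ok LamF l4]
  | Gen2 l1 l2 Is Js => [&& lam_ok LamF l1, lam_ok LamF l2, seq_ok Lam Is & seq_ok Lam Js]
  | Gen3 Is Js l1 l2 => [&& seq_ok Lam Is, seq_ok Lam Js, lam_ok LamF l1 & lam_ok LamF l2]
  | Gen4 Is Js => seq_ok Lam Is && seq_ok Lam Js
  end.

Definition split2 (K : seq nat) : seq (seq nat * seq nat) :=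
  [seq (take k K, drop k K) | k <- iota 0 (size K).+1].
Definition split3 (K : seq nat) : seq (seq nat * seq nat * seq nat) :=
  [seq (take i K, drop i (take j K), drop j K)
     | j <- iota 0 (size K).+1, i <- iota 0 j.+1].

(** Action of a spanning operator on a basis symbol: the result is the sum
    of the basis symbols in the returned list (all coefficients are 1,
    counted with multiplicity), exactly as in the defining formulas. *)
Definition act (g : gen) (b : basis) : seq basis :=
  let: (m1, K, m2) := b in
  match g with
  | Gen1 l1 l2 Is Js l3 l4 =>
      if [&& m1 == l2, K == Js & m2 == l4] then [:: (l1, Is, l3)] else [::]
  | Gen2 l1 l2 Is Js =>
      if m1 == l2 then [seq (l1, Is ++ p.2, m2) | p <- split2 K & p.1 == Js] else [::]
  | Gen3 Is Js l1 l2 =>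
      if m2 == l2 then [seq (m1, p.1 ++ Is, l1) | p <- split2 K & p.2 == Js] else [::]
  | Gen4 Is Js =>
      [seq (m1, t.1.1 ++ Is ++ t.2, m2) | t <- split3 K & t.1.2 == Js]
  end.

Section Coefs.
Variable C : numClosedFieldType.

(** Coefficient of the basis symbol b' in X(b), where X = sum_i c_i g_i. *)
Definition opcoef (X : seq (C * gen)) (b b' : basis) : C :=
  \sum_(p <- X) p.1 * (count_mem b' (act p.2 b))%:R.

Definition brcoef (g1 g2 : gen) (b b' : basis) : C :=
  (count_mem b' (flatten [seq act g1 x | x <- act g2 b]))%:R
  - (count_mem b' (flatten [seq act g2 x | x <- act g1 b]))%:R.
End Coefs.

Fixpoint lexgt (a b : seq nat) : bool :=
  match a, b with
  | x :: a', y :: b' => (y < x)%N || ((x == y) && lexgt a' b')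
  | _, _ => false
  end.
Definition seqgt (a b : seq nat) : bool :=
  (size b < size a)%N || ((size a == size b) && lexgt a b).

(** Spanning operators of G^{00} and of G^-. *)
Definition is_diag (g : gen) : bool :=
  match g with
  | Gen1 l1 l2 Is Js l3 l4 => [&& l1 == l2, Is == Js & l3 == l4]
  | Gen2 l1 l2 Is Js => (l1 == l2) && (Is == Js)
  | Gen3 Is Js l1 l2 => (Is == Js) && (l1 == l2)
  | Gen4 Is Js => Is == Js
  end.

Definition is_minus (g : gen) : bool :=
  match g with
  | Gen1 l1 l2 Is Js l3 l4 => (size Is < size Js)%N ||
      ((size Is == size Js) && seqgt (Js ++ [:: l2; l4]) (Is ++ [:: l1; l3]))
  | Gen2 l1 l2 Is Js => (size Is < size Js)%N ||
      ((size Is == size Js) && seqgt (Js ++ [:: l2]) (Is ++ [:: l1]))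
  | Gen3 Is Js l1 l2 => (size Is < size Js)%N ||
      ((size Is == size Js) && seqgt (Js ++ [:: l2]) (Is ++ [:: l1]))
  | Gen4 Is Js => (size Is < size Js)%N || ((size Is == size Js) && seqgt Js Is)
  end.

Definition omega (g : gen) : gen :=
  match g with
  | Gen1 l1 l2 Is Js l3 l4 => Gen1 l2 l1 Js Is l4 l3
  | Gen2 l1 l2 Is Js => Gen2 l2 l1 Js Is
  | Gen3 Is Js l1 l2 => Gen3 Js Is l2 l1
  | Gen4 Is Js => Gen4 Js Is
  end.

Section Rep.
Variables (Lam LamF : nat) (C : numClosedFieldType) (V : lmodType C).

(** rho : spanning operators -> End(V), extended linearly to the span.
    It is a representation of the open string algebra iff each rho g is
    linear, the linear extension is well defined (a combination that is
    the zero operator on T_o goes to 0), and brackets are preserved. *)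
Definition is_rep (rho : gen -> V -> V) : Prop :=
  [/\ (forall g, gen_ok Lam LamF g -> forall (a : C) (u w : V),
          rho g (a *: u + w) = a *: rho g u + rho g w),
      (forall X : seq (C * gen), all (gen_ok Lam LamF) (map snd X) ->
          (forall b, basis_ok Lam LamF b -> forall b', opcoef X b b' = 0) ->
          forall u, \sum_(p <- X) p.1 *: rho p.2 u = 0) &
      (forall g1 g2 (X : seq (C * gen)),
          gen_ok Lam LamF g1 -> gen_ok Lam LamF g2 ->
          all (gen_ok Lam LamF) (map snd X) ->
          (forall b, basis_ok Lam LamF b -> forall b',
              opcoef X b b' = brcoef C g1 g2 b b') ->
          forall u, \sum_(p <- X) p.1 *: rho p.2 u
                    = rho g1 (rho g2 u) - rho g2 (rho g1 u))].

Definition invariant_subspace (rho : gen -> V -> V) (S : V -> Prop) : Prop :=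
  [/\ S 0, (forall (a : C) u w, S u -> S w -> S (a *: u + w)) &
      (forall g, gen_ok Lam LamF g -> forall u, S u -> S (rho g u))].

Definition irreducible (rho : gen -> V -> V) : Prop :=
  forall S, invariant_subspace rho S -> (exists2 u, u != 0 & S u) -> forall u, S u.

(** V is a lowest weight representation with lowest weight h (h given by its
    values on the spanning operators of G^{00}, required to be real) and
    lowest weight vector v generating V. *)
Definition lowest_weight (rho : gen -> V -> V) (h : gen -> C) (v : V) : Prop :=
  [/\ v != 0,
      (forall g, gen_ok Lam LamF g -> is_diag g -> h g \is Num.real),
      (forall S, invariant_subspace rho S -> S v -> forall u, S u),
      (forall g, gen_ok Lam LamF g -> is_minus g -> rho g v = 0) &
      (forall g, gen_ok Lam LamF g -> is_diag g -> rho g v = h g *: v)].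

(** Positive definite Hermitian form (linear in the first argument) for which
    omega is the adjoint. *)
Definition unitary_form (rho : gen -> V -> V) (form : V -> V -> C) : Prop :=
  [/\ (forall (a : C) u1 u2 w, form (a *: u1 + u2) w = a * form u1 w + form u2 w),
      (forall u w, form w u = (form u w)^*),
      (forall u, u != 0 -> 0 < form u u) &
      (forall g, gen_ok Lam LamF g -> forall u w,
          form (rho g u) w = form u (rho (omega g) w))].
End Rep.

Definition hI (C : Type) (h : gen -> C) (l1 : nat) (Is : seq nat) (l2 : nat) : C :=
  h (Gen1 l1 l1 Is Is l2 l2).

(* Main.v *)
Require Import Defs.
From HB Require Import structures.
From mathcomp Require Import all_boot all_order all_algebra.
From mathcomp Require Import reals complex ring.
Import Order.TTheory GRing.Theory Num.Theory.
Local Open Scope ring_scope.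

Lemma act1 l1 l2 S T l3 l4 (b : basis) :
  act (Gen1 l1 l2 S T l3 l4) b = if b == (l2, T, l4) then [:: (l1, S, l3)] else [::].
Proof. by case: b => [[m1 K] m2] /=; rewrite !xpair_eqE andbA. Qed.

Lemma br1 (C : numClosedFieldType) a1 a2 S1 T1 a3 a4 c1 c2 S2 T2 c3 c4 b b' :
  brcoef C (Gen1 a1 a2 S1 T1 a3 a4) (Gen1 c1 c2 S2 T2 c3 c4) b b' =
  ([&& b == (c2, T2, c4), (c1, S2, c3) == (a2, T1, a4) & (a1, S1, a3) == b'])%:R
  - ([&& b == (a2, T1, a4), (a1, S1, a3) == (c2, T2, c4) & (c1, S2, c3) == b'])%:R.
Proof.
rewrite /brcoef !act1.
case: (b == (c2, T2, c4)); case: (b == (a2, T1, a4)) => /=; rewrite ?act1 ?cats0.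
 all: rewrite ?xpair_eqE -?andbA.
 all: case: (c1 == a2); case: (S2 == T1); case: (c3 == a4); case: (a1 == c2); case: (S1 == T2); case: (a3 == c4) => /=; rewrite ?addn0.
 all: done.
Qed.

Lemma op1 (C : numClosedFieldType) (X : seq (C * gen)) b b' :
  opcoef X b b' = \sum_(p <- X) p.1 * (count_mem b' (act p.2 b))%:R.
Proof. by []. Qed.

Lemma lexgt_irr a : lexgt a a = false.
Proof. by elim: a => //= x a ->; rewrite ltnn eqxx. Qed.

Lemma seqgt_irr a : seqgt a a = false.
Proof. by rewrite /seqgt ltnn eqxx lexgt_irr. Qed.

Theorem lemma14 (R : realType) (Lam LamF : nat) (hLam : (0 < Lam)%N) (hLamF : (0 < LamF)%N)
  (V : lmodType R[i]) (rho : gen -> V -> V) (h : gen -> R[i]) (v : V)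
  (form : V -> V -> R[i])
  (Hrep : is_rep Lam LamF rho)
  (Hirr : irreducible Lam LamF rho)
  (Hlw : lowest_weight Lam LamF rho h v)
  (Hunit : unitary_form Lam LamF rho form)
  (Is Js : seq nat) (l1 l2 l3 l4 : nat)
  (hI_ok : seq_ok Lam Is) (hJ_ok : seq_ok Lam Js)
  (hl1 : lam_ok LamF l1) (hl2 : lam_ok LamF l2)
  (hl3 : lam_ok LamF l3) (hl4 : lam_ok LamF l4)
  (hgt : seqgt (Is ++ [:: l1; l3]) (Js ++ [:: l2; l4])) :
  exists n : nat, hI h l2 Js l4 - hI h l1 Is l3 = n%:R.
Proof.
set A := Gen1 l1 l2 Is Js l3 l4.
set B := Gen1 l2 l1 Js Is l4 l3.
set HJ := Gen1 l2 l2 Js Js l4 l4.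
set HI := Gen1 l1 l1 Is Is l3 l3.
have okA : gen_ok Lam LamF A by rewrite /= hl1 hl2 hI_ok hJ_ok hl3 hl4.
have okB : gen_ok Lam LamF B by rewrite /= hl1 hl2 hI_ok hJ_ok hl3 hl4.
have okHJ : gen_ok Lam LamF HJ by rewrite /= hl2 hJ_ok hl4.
have okHI : gen_ok Lam LamF HI by rewrite /= hl1 hI_ok hl3.
have neIJ : ((l1, Is, l3) == (l2, Js, l4)) = false.
  apply/negbTE/eqP => -[e1 e2 e3]; move: hgt; by rewrite e1 e2 e3 seqgt_irr.
have neJI : ((l2, Js, l4) == (l1, Is, l3)) = false by rewrite eq_sym.
case: Hrep => Hlin _ Hbr.
case: Hlw => vnz Hreal _ Hmin Hdiag.
case: Hunit => Flin Fsym Fpos Fadj.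
have rho0 g : gen_ok Lam LamF g -> rho g 0 = 0.
  move=> og; have := Hlin g og (-1) 0 0; by rewrite scaler0 add0r scaleN1r addNr.
have rhoZ g a u : gen_ok Lam LamF g -> rho g (a *: u) = a *: rho g u.
  move=> og; have := Hlin g og a u 0; by rewrite addr0 rho0 // addr0.
have rhoD g u w : gen_ok Lam LamF g -> rho g (u + w) = rho g u + rho g w.
  move=> og; have := Hlin g og 1 u w; by rewrite !scale1r.
have rhoB g u w : gen_ok Lam LamF g -> rho g (u - w) = rho g u - rho g w.
  move=> og; have := Hlin g og (-1) w u; rewrite !scaleN1r => e.
  by rewrite [u - w]addrC e addrC.
have BA u : rho B (rho A u) - rho A (rho B u) = rho HJ u - rho HI u.
  rewrite -(Hbr B A [:: (1, HJ); (-1, HI)]) //.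
  - by rewrite !big_cons big_nil scale1r scaleN1r addr0.
  - by rewrite /= hl1 hl2 hl3 hl4 hI_ok hJ_ok.
  move=> b _ b'; rewrite br1 op1 !big_cons big_nil /= !act1 addr0 mul1r mulN1r.
  rewrite !eqxx /=.
  by case: (b == (l2, Js, l4)); case: (b == (l1, Is, l3)) => /=; rewrite ?addn0 ?andbT.
have HJA u : rho HJ (rho A u) - rho A (rho HJ u) = - rho A u.
  rewrite -(Hbr HJ A [:: (-1, A)]) //.
  - by rewrite !big_cons big_nil scaleN1r addr0.
  - by rewrite /= hl1 hl2 hl3 hl4 hI_ok hJ_ok.
  move=> b _ b'; rewrite br1 op1 !big_cons big_nil /= !act1 addr0 mulN1r.
  rewrite !eqxx /= ?neIJ ?neJI /= ?sub0r ?subr0.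
  by case: (b == (l2, Js, l4)) => /=; rewrite ?addn0 ?sub0r ?subr0 ?oppr0.
have HIA u : rho HI (rho A u) - rho A (rho HI u) = rho A u.
  rewrite -(Hbr HI A [:: (1, A)]) //.
  - by rewrite !big_cons big_nil scale1r addr0.
  - by rewrite /= hl1 hl2 hl3 hl4 hI_ok hJ_ok.
  move=> b _ b'; rewrite br1 op1 !big_cons big_nil /= !act1 addr0 mul1r.
  rewrite !eqxx /= ?neIJ ?neJI /= ?sub0r ?subr0.
  by case: (b == (l2, Js, l4)) => /=; rewrite ?addn0 ?andbF ?sub0r ?subr0 ?oppr0.
have diagHJ : is_diag HJ by rewrite /= !eqxx.
have diagHI : is_diag HI by rewrite /= !eqxx.
have minB : is_minus B.
  move: (hgt); rewrite /= /seqgt !size_cat /= ltn_add2r eqn_add2r.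
  case/orP=> [->//|/andP[/eqP e gt]]; by rewrite e eqxx gt !orbT.
rewrite /hI -/HJ -/HI.
set hJ := h HJ; set hI := h HI; set c := hJ - hI.
pose w n := iter n (rho A) v.
have HJw n : rho HJ (w n) = (hJ - n%:R) *: w n.
  elim: n => [|n IH]; first by rewrite /= subr0 Hdiag.
  move/eqP: (HJA (w n)); rewrite subr_eq => /eqP; rewrite [w n.+1]/= => ->.
  rewrite IH rhoZ // -natr1 opprD addrA [in RHS]scalerBl scale1r; exact: addrC.
have HIw n : rho HI (w n) = (hI + n%:R) *: w n.
  elim: n => [|n IH]; first by rewrite /= addr0 Hdiag.
  move/eqP: (HIA (w n)); rewrite subr_eq => /eqP; rewrite [w n.+1]/= => ->.
  rewrite IH rhoZ // -natr1 addrA [in RHS]scalerDl scale1r; exact: addrC.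
have Bw n : rho B (w n.+1) = (n.+1%:R * (c - n%:R)) *: w n.
  elim: n => [|n IH].
    move/eqP: (BA v); rewrite subr_eq => /eqP; rewrite [w 1]/= => ->.
    rewrite (Hmin B) // rho0 // addr0 (Hdiag HJ) // (Hdiag HI) // -scalerBl mul1r subr0.
    done.
  move/eqP: (BA (w n.+1)); rewrite subr_eq => /eqP; rewrite [w n.+2]/= => ->.
  rewrite IH rhoZ // HJw HIw -scalerBl -scalerDl.
  congr (_ *: _); rewrite /c; ring.
have form0 u : form 0 u = 0.
  have := Flin (-1) v v u; by rewrite scaleN1r addNr mulN1r addNr.
have formZ a u u' : form (a *: u) u' = a * form u u'.
  have := Flin a u 0 u'; by rewrite addr0 form0 addr0.
have fge0 u : 0 <= form u u.
  case: (eqVneq u 0) => [->|nz]; first by rewrite form0.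
  exact: ltW (Fpos u nz).
have realc : c \is Num.real.
  by apply: rpredB; [apply: Hreal okHJ diagHJ | apply: Hreal okHI diagHI].
pose f n := form (w n) (w n).
have fS n : f n.+1 = n.+1%:R * (c - n%:R) * f n.
  rewrite /f {1}[w n.+1]/= Fadj // [omega A]/= -/B Bw Fsym formZ.
  have e1 (x y : R[i]) : (x * y)^* = x^* * y^* by exact: rmorphM.
  rewrite e1 conj_Creal; last by apply: rpredM; [apply: rpred_nat | apply: rpredB; [|apply: rpred_nat]].
  by rewrite -Fsym.
have P n : (exists m : nat, c = m%:R) \/ (0 < f n /\ n%:R <= c).
  elim: n => [|n IH].
    right; split; first exact: Fpos v vnz.
    have := fge0 (w 1); rewrite -/(f 1) fS -mulrA pmulr_rge0 ?ltr0Sn // pmulr_lge0.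
      by rewrite subr_ge0.
    exact: Fpos v vnz.
  case: IH => [L|[fp le]]; first by left.
  case: (eqVneq c n%:R) => [e|ne]; first by left; exists n.
  have lt : n%:R < c by rewrite lt_neqAle eq_sym ne le.
  have fp1 : 0 < f n.+1 by rewrite fS mulr_gt0 // mulr_gt0 // ?ltr0Sn // subr_gt0.
  right; split => //.
  have := fge0 (w n.+2); rewrite -/(f n.+2) fS -mulrA pmulr_rge0 ?ltr0Sn // pmulr_lge0 //.
  by rewrite subr_ge0.
case/complex_realP: realc => x cx.
have hN := archi_boundP (normr_ge0 x).
case: (P (Num.Def.archi_bound `|x|)) => [//|[_ le]].
move: le; rewrite cx -(rmorph_nat (real_complex R)) lecR => le.
by have := le_lt_trans (le_trans le (ler_norm x)) hN; rewrite ltxx.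
Qed.
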